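(* Let $(T_0,\widetilde T_0)$ be a joint pair of closed abstract Friedrichs operators on a complex Hilbert space $\mathcal{H}$, with $T_1:=\widetilde T_0^*$, $\widetilde T_1:=T_0^*$, $\mathcal{W}_0:=\operatorname{dom}T_0=\operatorname{dom}\widetilde T_0$ and $\mathcal{W}:=\operatorname{dom}T_1=\operatorname{dom}\widetilde T_1$, the latter equipped with the graph norm $\|u\|_{T_1}=(\|u\|^2+\|T_1u\|^2)^{1/2}$. Then the sum $\mathcal{W}_0+\operatorname{ker}T_1+\operatorname{ker}\widetilde T_1$ is direct and is a closed subspace of $\mathcal{W}$. In particular, $\mathcal{W}_0\dotplus\operatorname{ker}T_1$ and $\mathcal{W}_0\dotplus\operatorname{ker}\widetilde T_1$ are both closed in $\mathcal{W}$.
   Context: $\mathcal{H}$ is a complex Hilbert space with inner product $\langle\cdot,\cdot\rangle$ and norm $\|\cdot\|$. A pair $(T,\widetilde T)$ of densely defined linear operators on $\mathcal{H}$ is a joint pair of abstract Friedrichs operators if: (T1) $T$ and $\widetilde T$ have a common dense domain $\mathcal{D}$ and $\langle T\varphi,\psi\rangle=\langle\varphi,\widetilde T\psi\rangle$ for all $\varphi,\psi\in\mathcal{D}$; (T2) there is $c>0$ with $\|(T+\widetilde T)\varphi\|\le c\|\varphi\|$ for all $\varphi\in\mathcal{D}$; (T3) there is $\mu_0>0$ with $\langle (T+\widetilde T)\varphi,\varphi\rangle\ge 2\mu_0\|\varphi\|^2$ for all $\varphi\in\mathcal{D}$. A joint pair of closed abstract Friedrichs operators is such a pair $(T_0,\widetilde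 T_0)$ in which both operators are closed. One has $T_0\subseteq T_1$, $\widetilde T_0\subseteq\widetilde T_1$ and $\operatorname{dom}T_1=\operatorname{dom}\widetilde T_1$; the graph norms of $T_1$ and $\widetilde T_1$ on $\mathcal{W}$ are equivalent. *)

(* Defs.v *)
From HB Require Import structures.
From mathcomp Require Import all_boot all_order all_algebra.
From mathcomp Require Import complex.
From mathcomp Require Import all_classical reals.
Set Implicit Arguments. Unset Strict Implicit. Unset Printing Implicit Defensive.
Import Order.TTheory GRing.Theory Num.Theory.
Local Open Scope ring_scope.
Local Open Scope classical_set_scope.

Section Hilbert.
Variable R : realType.
Local Notation C := (R[i]).
Variable H : lmodType C.
Variable ip : H -> H -> C.

Definition hnorm (x : H) : R := Num.sqrt (complex.Re (ip x x)).

Definition is_hilbert : Prop :=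
  [/\ (forall x y, ip x y = Num.conj (ip y x)),
      (forall (a : C) x y z, ip (a *: x + y) z = a * ip x z + ip y z),
      (forall x, 0 <= ip x x),
      (forall x, ip x x = 0 -> x = 0) &
      (forall s : nat -> H,
         (forall e : R, 0 < e -> exists N, forall m n, (N <= m)%N -> (N <= n)%N ->
              hnorm (s m - s n) < e) ->
         exists x, forall e : R, 0 < e -> exists N, forall n, (N <= n)%N ->
              hnorm (s n - x) < e)].

Record operator := Op { dom : set H; app : H -> H }.

Definition is_subspace (S : set H) : Prop :=
  S 0 /\ forall (a : C) x y, S x -> S y -> S (a *: x + y).

Definition linear_op (T : operator) : Prop :=
  is_subspace (dom T) /\
  forall (a : C) x y, dom T x -> dom T y -> app T (a *: x + y) = a *: app T x + app T y.

Definition dense (S : set H) : Prop :=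
  forall x (e : R), 0 < e -> exists y, S y /\ hnorm (x - y) < e.

Definition densely_defined (T : operator) : Prop := linear_op T /\ dense (dom T).

Definition closed_op (T : operator) : Prop :=
  forall x y, (forall e : R, 0 < e -> exists u, dom T u /\ hnorm (u - x) < e /\
                                       hnorm (app T u - y) < e) ->
              dom T x /\ app T x = y.

Definition is_adjoint (A B : operator) : Prop :=
  (forall v, dom B v <-> exists w, forall u, dom A u -> ip (app A u) v = ip u w) /\
  (forall v, dom B v -> forall u, dom A u -> ip (app A u) v = ip u (app B v)).

Definition joint_friedrichs (T Tt : operator) : Prop :=
  [/\ densely_defined T /\ densely_defined Tt, dom T = dom Tt,
      (forall phi psi, dom T phi -> dom T psi -> ip (app T phi) psi = ip phi (app Tt psi)),
      (exists c : R, 0 < c /\ forall phi, dom T phi ->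
           hnorm (app T phi + app Tt phi) <= c * hnorm phi) &
      (exists mu0 : R, 0 < mu0 /\ forall phi, dom T phi ->
           (real_complex R (2 * mu0 * hnorm phi ^+ 2) <= ip (app T phi + app Tt phi) phi))].

Definition joint_closed_friedrichs (T0 Tt0 : operator) : Prop :=
  joint_friedrichs T0 Tt0 /\ closed_op T0 /\ closed_op Tt0.

Definition kernel (T : operator) : set H := [set u | dom T u /\ app T u = 0].

Definition graph_norm (T : operator) (u : H) : R :=
  Num.sqrt (hnorm u ^+ 2 + hnorm (app T u) ^+ 2).

Definition closed_in_graph (T : operator) (S : set H) : Prop :=
  S `<=` dom T /\
  forall u, dom T u ->
    (forall e : R, 0 < e -> exists s, S s /\ graph_norm T (u - s) < e) -> S u.

Definition sum2 (A B : set H) : set H := [set a + b | a in A & b in B].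
Definition sum3 (A B D : set H) : set H :=
  [set x | exists a b d, [/\ A a, B b, D d & x = a + b + d]].

Definition direct2 (A B : set H) : Prop :=
  forall a b, A a -> B b -> a + b = 0 -> a = 0 /\ b = 0.
Definition direct3 (A B D : set H) : Prop :=
  forall a b d, A a -> B b -> D d -> a + b + d = 0 -> [/\ a = 0, b = 0 & d = 0].
End Hilbert.

(* Main.v *)
Require Import Defs.
From HB Require Import structures.
From mathcomp Require Import all_boot all_order all_algebra.
From mathcomp Require Import complex.
From mathcomp Require Import all_classical reals.
From mathcomp Require Import ring lra.
Import Order.TTheory GRing.Theory Num.Theory.
Local Open Scope ring_scope.
Local Open Scope classical_set_scope.
Set Implicit Arguments. Unset Strict Implicit. Unset Printing Implicit Defensive.

Lemma sub3 (V : zmodType) (a b c a' b' c' : V) : (a + b + c) - (a' + b' + c') = (a - a') + (b - b') + (c - c').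
Proof. rewrite opprD opprD addrACA; congr (_ + _); exact: addrACA. Qed.
Lemma add3 (V : zmodType) (a b c a' b' c' : V) : (a + b + c) + (a' + b' + c') = (a + a') + (b + b') + (c + c').
Proof. rewrite addrACA; congr (_ + _); exact: addrACA. Qed.
Lemma subch (V : zmodType) (a b c : V) : (a - c) + (c - b) = a - b.
Proof. by rewrite addrA subrK. Qed.

Section Base.
Variable R : realType.
Local Notation Re := (@complex.Re R).
Local Notation Im := (@complex.Im R).
Local Notation rc := (real_complex R).

Lemma ReD (x y : R[i]) : Re (x + y) = Re x + Re y.
Proof. by case: x => a b; case: y => c d. Qed.
Lemma ReN (x : R[i]) : Re (- x) = - Re x.
Proof. by case: x. Qed.
Lemma ReJ (x : R[i]) : Re (Num.conj x) = Re x.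
Proof. by case: x. Qed.
Lemma ReM (k : R) (x : R[i]) : Re (rc k * x) = k * Re x.
Proof. case: x => a b /=. by rewrite mul0r subr0. Qed.
Lemma Re0 : Re 0 = 0. Proof. by []. Qed.
Lemma conj_rc (k : R) : Num.conj (rc k) = rc k.
Proof. exact: conjc_real. Qed.
Lemma lec_Re (x y : R[i]) : x <= y -> Re x <= Re y.
Proof. by rewrite lecE => /andP[]. Qed.
Lemma Re_i (z : R[i]) : Re ('i%C * z) = - Im z.
Proof. case: z => a b /=. rewrite mul0r mul1r. lra. Qed.
Lemma c_eq0 (z : R[i]) : Re z = 0 -> Im z = 0 -> z = 0.
Proof. by case: z => a b /= -> ->. Qed.

Lemma eps_le (a b K : R) : 0 <= K ->
  (forall e, 0 < e -> e <= 1 -> a <= b + e * K) -> a <= b.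
Proof.
move=> K0 h; rewrite leNgt; apply/negP => ba.
have d0 : 0 < a - b by rewrite subr_gt0.
set e := (a - b) / (K + (a - b) + 1).
have den0 : 0 < K + (a - b) + 1 by lra.
have e0 : 0 < e by rewrite divr_gt0.
have e1 : e <= 1 by rewrite /e ler_pdivrMr // mul1r; lra.
have := h e e0 e1.
have : e * K < a - b.
  rewrite /e mulrAC ltr_pdivrMr //.
  have : 0 <= (a - b) * K by rewrite mulr_ge0 // ltW.
  nra.
lra.
Qed.

Lemma archi_inv (e : R) : 0 < e -> exists N : nat, (N.+1%:R)^-1 < e.
Proof.
move=> e0; exists (Num.Def.archi_bound (e^-1)).
have ei : 0 <= e^-1 by rewrite invr_ge0 ltW.
have := archi_boundP ei.
set N := Num.Def.archi_bound _ => hN.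
have hN1 : e^-1 < N.+1%:R by rewrite -natr1; lra.
rewrite -(invrK e) ltf_pV2 ?posrE ?invr_gt0 //; lra.
Qed.

Variable H : lmodType R[i].
Variable ip : H -> H -> R[i].
Hypothesis hH : is_hilbert ip.
Local Notation hn := (hnorm ip).

Lemma ipC x y : ip x y = Num.conj (ip y x).
Proof. by case: hH. Qed.
Lemma ipL (a : R[i]) x y z : ip (a *: x + y) z = a * ip x z + ip y z.
Proof. by case: hH. Qed.
Lemma ipDl x y z : ip (x + y) z = ip x z + ip y z.
Proof. by rewrite -[x]scale1r ipL mul1r scale1r. Qed.
Lemma ip0l z : ip 0 z = 0.
Proof. by apply: (addrI (ip 0 z)); rewrite addr0 -ipDl addr0. Qed.
Lemma ipZl a x z : ip (a *: x) z = a * ip x z.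
Proof. by rewrite -[a *: x]addr0 ipL ip0l addr0. Qed.
Lemma ipNl x z : ip (- x) z = - ip x z.
Proof. by rewrite -scaleN1r ipZl mulN1r. Qed.
Lemma ipBl x y z : ip (x - y) z = ip x z - ip y z.
Proof. by rewrite ipDl ipNl. Qed.
Lemma ipDr x y z : ip z (x + y) = ip z x + ip z y.
Proof. by rewrite ipC ipDl rmorphD (ipC z x) (ipC z y). Qed.
Lemma ip0r z : ip z 0 = 0.
Proof. rewrite ipC ip0l; exact: rmorph0. Qed.
Lemma ipZr a x z : ip z (a *: x) = Num.conj a * ip z x.
Proof. by rewrite ipC ipZl rmorphM (ipC z x). Qed.
Lemma ipNr x z : ip z (- x) = - ip z x.
Proof. by rewrite ipC ipNl rmorphN (ipC z x). Qed.
Lemma ipBr x y z : ip z (x - y) = ip z x - ip z y.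
Proof. by rewrite ipDr ipNr. Qed.

Definition rip x y := Re (ip x y).
Lemma ripC x y : rip x y = rip y x.
Proof. by rewrite /rip ipC ReJ. Qed.
Lemma ripDl x y z : rip (x + y) z = rip x z + rip y z.
Proof. by rewrite /rip ipDl ReD. Qed.
Lemma ripDr x y z : rip z (x + y) = rip z x + rip z y.
Proof. by rewrite /rip ipDr ReD. Qed.
Lemma ripNl x z : rip (- x) z = - rip x z.
Proof. by rewrite /rip ipNl ReN. Qed.
Lemma ripNr x z : rip z (- x) = - rip z x.
Proof. by rewrite /rip ipNr ReN. Qed.
Lemma ripBl x y z : rip (x - y) z = rip x z - rip y z.
Proof. by rewrite ripDl ripNl. Qed.
Lemma ripBr x y z : rip z (x - y) = rip z x - rip z y.
Proof. by rewrite ripDr ripNr. Qed.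
Lemma ripZl k x z : rip (rc k *: x) z = k * rip x z.
Proof. by rewrite /rip ipZl ReM. Qed.
Lemma ripZr k x z : rip z (rc k *: x) = k * rip z x.
Proof. by rewrite /rip ipZr conj_rc ReM. Qed.
Lemma rip0l z : rip 0 z = 0. Proof. by rewrite /rip ip0l. Qed.
Lemma rip0r z : rip z 0 = 0. Proof. by rewrite /rip ip0r. Qed.

Lemma ripxx_ge0 x : 0 <= rip x x.
Proof. case: hH => _ _ hp _ _; by have := @lec_Re 0 (ip x x) (hp x). Qed.
Lemma hn_ge0 x : 0 <= hn x. Proof. exact: sqrtr_ge0. Qed.
Lemma hn2 x : hn x ^+ 2 = rip x x.
Proof. by rewrite /hnorm sqr_sqrtr // ripxx_ge0. Qed.
Lemma hn_eq0 x : hn x = 0 -> x = 0.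
Proof.
move=> h; case: hH => _ _ hp hd _; apply: hd.
have r0 : rip x x = 0 by rewrite -hn2 h expr2 mul0r.
apply: c_eq0 => //; exact: ger0_Im (hp x).
Qed.
Lemma hn0 : hn 0 = 0.
Proof. by rewrite /hnorm ip0l Re0 sqrtr0. Qed.
Lemma hnN x : hn (- x) = hn x.
Proof. by rewrite /hnorm ipNl ipNr opprK. Qed.
Lemma hnB x y : hn (x - y) = hn (y - x).
Proof. by rewrite -hnN opprB. Qed.

Lemma CS x y : rip x y <= hn x * hn y.
Proof.
set a := hn y; set b := hn x.
have a0 : 0 <= a := hn_ge0 y. have b0 : 0 <= b := hn_ge0 x.
have := ripxx_ge0 (rc a *: x - rc b *: y).
rewrite !(ripBl, ripBr, ripZl, ripZr) -!hn2 -/a -/b (ripC y x) => h.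
have [ab0|ab0] := eqVneq (a * b) 0.
  move/eqP: ab0; rewrite mulf_eq0 => /orP[] /eqP h0.
    by rewrite h0 mulr0 (@hn_eq0 y h0) rip0r lexx.
  by rewrite h0 mul0r (@hn_eq0 x h0) rip0l lexx.
have abp : 0 < a * b by rewrite lt_def ab0 mulr_ge0.
rewrite mulrC; nra.
Qed.

Lemma CS' x y : - rip x y <= hn x * hn y.
Proof. by rewrite -ripNr -(hnN y) CS. Qed.

Lemma hn_triangle x y : hn (x + y) <= hn x + hn y.
Proof.
have h : hn (x + y) ^+ 2 <= (hn x + hn y) ^+ 2.
  rewrite hn2 !(ripDl, ripDr) (ripC y x) sqrrD -!hn2.
  have := CS x y; lra.
have := ler_wsqrtr h; rewrite !sqrtr_sqr !ger0_norm //.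
  by rewrite addr_ge0 // hn_ge0.
exact: hn_ge0.
Qed.


Lemma hn_small0 z K : 0 <= K -> (forall e, 0 < e -> e <= 1 -> hn z <= e * K) -> z = 0.
Proof.
move=> K0 h; apply: hn_eq0; apply/eqP; rewrite eq_le hn_ge0 andbT.
apply: (eps_le K0) => e e0 e1; rewrite add0r; exact: h.
Qed.

Lemma real_small0 (r K : R) : 0 <= K -> (forall e, 0 < e -> e <= 1 -> r <= e * K /\ - r <= e * K) -> r = 0.
Proof.
move=> K0 h; apply/eqP; rewrite eq_le; apply/andP; split.
  apply: (eps_le K0) => e e0 e1; rewrite add0r; exact: (h e e0 e1).1.
rewrite -oppr_le0; apply: (eps_le K0) => e e0 e1; rewrite add0r; exact: (h e e0 e1).2.
Qed.

Lemma small_ip a b z :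
  (forall e, 0 < e -> exists w1 w2, [/\ hn w1 < e, hn w2 < e & z = ip a w1 + ip b w2]) -> z = 0.
Proof.
move=> h; apply: c_eq0.
  apply: (real_small0 (K := hn a + hn b)); first by rewrite addr_ge0 // hn_ge0.
  move=> e e0 _; have [w1 [w2 [h1 h2 ->]]] := h e e0.
  rewrite ReD -/(rip a w1) -/(rip b w2).
  have := CS a w1; have := CS b w2; have := CS' a w1; have := CS' b w2.
  have := hn_ge0 a; have := hn_ge0 b.
  have : hn a * hn w1 <= hn a * e by rewrite ler_wpM2l ?hn_ge0 // ltW.
  have : hn b * hn w2 <= hn b * e by rewrite ler_wpM2l ?hn_ge0 // ltW.
  move=> *; split; nra.
have hi : - Im z = Re ('i%C * z) by rewrite Re_i.
rewrite -[Im z]opprK; apply/eqP; rewrite oppr_eq0 hi; apply/eqP.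
apply: (real_small0 (K := hn ('i%C *: a) + hn ('i%C *: b))); first by rewrite addr_ge0 // hn_ge0.
move=> e e0 _; have [w1 [w2 [h1 h2 ->]]] := h e e0.
rewrite mulrDr -!ipZl ReD -/(rip _ w1) -/(rip _ w2).
set a' := 'i%C *: a; set b' := 'i%C *: b.
have := CS a' w1; have := CS b' w2; have := CS' a' w1; have := CS' b' w2.
have := hn_ge0 a'; have := hn_ge0 b'.
have : hn a' * hn w1 <= hn a' * e by rewrite ler_wpM2l ?hn_ge0 // ltW.
have : hn b' * hn w2 <= hn b' * e by rewrite ler_wpM2l ?hn_ge0 // ltW.
move=> *; split; nra.
Qed.

Lemma perp_dense (S : set H) z : dense ip S -> (forall p, S p -> ip z p = 0) -> z = 0.
Proof.
move=> dS h; apply: (hn_small0 (K := 1)); first exact: ler01.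
move=> e e0 _; have [p [Sp hp]] := dS z e e0.
have [hz0|hz0] := eqVneq (hn z) 0; first by rewrite hz0 mulr1 ltW.
have hzp : 0 < hn z by rewrite lt_def hz0 hn_ge0.
have : hn z ^+ 2 <= hn z * (e * 1).
  rewrite hn2 -[X in rip z X](subrK p) ripDr /rip (h p Sp) Re0 addr0 mulr1 -/(rip z (z - p)).
  apply: (le_trans (CS _ _)); rewrite ler_wpM2l ?hn_ge0 // ltW //.
by rewrite expr2 ler_pM2l.
Qed.

Lemma inv_le (m N : nat) : (N <= m)%N -> (m.+1%:R : R)^-1 <= (N.+1%:R)^-1.
Proof. by move=> hm; rewrite lef_pV2 ?posrE ?ltr0Sn // ler_nat. Qed.

Lemma cauchy_from (a : nat -> H) (K : R) : 0 <= K ->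
  (forall m n, hn (a m - a n) <= K * ((m.+1%:R)^-1 + (n.+1%:R)^-1)) ->
  exists L, forall e, 0 < e -> exists N, forall n, (N <= n)%N -> hn (a n - L) < e.
Proof.
move=> K0 h; case: hH => _ _ _ _ hc; apply: hc => e e0.
have d0 : 0 < 2 * K + 1 by lra.
have [N hN] := archi_inv (divr_gt0 e0 d0).
exists N => m n hm hn'; apply: (le_lt_trans (h m n)).
have := inv_le hm; have := inv_le hn'.
have := @ltr0Sn R m; have := @ltr0Sn R n.
set im := (m.+1%:R)^-1; set in' := (n.+1%:R)^-1; set iN := (N.+1%:R)^-1.
move: hN; rewrite ltr_pdivlMr // => hN _ _ h1 h2.
have : K * (im + in') <= K * (2 * iN) by rewrite ler_wpM2l //; lra.
have : 0 <= iN by rewrite invr_ge0 ler0n.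
have -> : K * (2 * iN) = 2 * (K * iN) by ring.
have e1 : iN * (2 * K + 1) = 2 * (K * iN) + iN by ring.
have hN2 : iN * (2 * K + 1) < e := hN. lra.
Qed.


Section Adj.
Variables A B : operator H.
Hypothesis hAB : is_adjoint ip A B.
Hypothesis dA : dense ip (dom A).

Lemma adj_app_eq v w : dom B v -> (forall u, dom A u -> ip (app A u) v = ip u w) -> app B v = w.
Proof.
move=> dv hw; apply/eqP; rewrite -subr_eq0; apply/eqP.
apply: (perp_dense dA) => p Ap.
by rewrite ipC ipBr -(hAB.2 v dv p Ap) (hw p Ap) subrr; exact: rmorph0.
Qed.

Lemma adj_intro v w : (forall u, dom A u -> ip (app A u) v = ip u w) -> dom B v /\ app B v = w.
Proof.
move=> hw; have dv : dom B v by apply/(hAB.1 v); exists w.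
by split => //; apply: adj_app_eq.
Qed.

Lemma adj_lin : linear_op B.
Proof.
have h0 : dom B 0 /\ app B 0 = 0.
  by apply: adj_intro => u _; rewrite !ip0r.
have hl : forall (a : R[i]) x y, dom B x -> dom B y ->
    dom B (a *: x + y) /\ app B (a *: x + y) = a *: app B x + app B y.
  move=> a x y dx dy; apply: adj_intro => u Au.
  by rewrite !ipDr !ipZr (hAB.2 x dx u Au) (hAB.2 y dy u Au).
split; first split; first exact: h0.1.
- by move=> a x y dx dy; exact: (hl a x y dx dy).1.
- by move=> a x y dx dy; exact: (hl a x y dx dy).2.
Qed.

Lemma adj_ker_closed v : (forall e, 0 < e -> exists v', kernel B v' /\ hn (v' - v) < e) -> kernel B v.
Proof.
move=> h; suff : dom B v /\ app B v = 0 by [].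
apply: adj_intro => u Au; rewrite ip0r.
apply: (small_ip (a := app A u) (b := 0)) => e e0.
have [v' [[dv' Bv'] hv']] := h e e0.
exists (v - v'), 0; split; first by rewrite hnB.
  by rewrite hn0.
by rewrite ip0l addr0 ipBr (hAB.2 v' dv' u Au) Bv' ip0r subr0.
Qed.
End Adj.


Section Ops.
Variables T0 Tt0 T1 Tt1 : operator H.
Hypothesis hdom : dom T0 = dom Tt0.
Hypothesis lin0 : linear_op T0.
Hypothesis lin0t : linear_op Tt0.
Hypothesis dense0 : dense ip (dom T0).
Hypothesis hsym : forall p q, dom T0 p -> dom T0 q -> ip (app T0 p) q = ip p (app Tt0 q).
Variables c mu0 : R.
Hypothesis c0 : 0 < c.
Hypothesis mu00 : 0 < mu0.
Hypothesis hc : forall p, dom T0 p -> hn (app T0 p + app Tt0 p) <= c * hn p.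
Hypothesis hmu : forall p, dom T0 p -> rc (2 * mu0 * hn p ^+ 2) <= ip (app T0 p + app Tt0 p) p.
Hypothesis cl0 : closed_op ip T0.
Hypothesis hT1 : is_adjoint ip Tt0 T1.
Hypothesis hTt1 : is_adjoint ip T0 Tt1.

Local Notation D := (dom T0).
Local Notation B0 p := (app T0 p + app Tt0 p).

Lemma denset : dense ip (dom Tt0). Proof. by rewrite -hdom. Qed.

Lemma T0_sub p : D p -> dom T1 p /\ app T1 p = app T0 p.
Proof.
move=> Dp; apply: (adj_intro hT1 denset) => u; rewrite -hdom => Du.
by rewrite ipC -(hsym Dp Du) (ipC u).
Qed.

Lemma Tt0_sub p : D p -> dom Tt1 p /\ app Tt1 p = app Tt0 p.
Proof.
by move=> Dp; apply: (adj_intro hTt1 dense0) => u Du; rewrite hsym.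
Qed.

Lemma lin1 : linear_op T1. Proof. exact: (adj_lin hT1 denset). Qed.
Lemma lin1t : linear_op Tt1. Proof. exact: (adj_lin hTt1 dense0). Qed.

Lemma B0sym p q : D p -> D q -> ip (B0 p) q = ip p (B0 q).
Proof.
move=> Dp Dq; rewrite ipDl ipDr (hsym Dp Dq) addrC; congr (_ + _).
by rewrite ipC -(hsym Dq Dp) (ipC p).
Qed.

Lemma subB (T : operator H) p q : linear_op T -> dom T p -> dom T q ->
  dom T (p - q) /\ app T (p - q) = app T p - app T q.
Proof.
case=> [[_ hs] hl] dp dq; have -> : p - q = (-1) *: q + p by rewrite scaleN1r addrC.
split; first exact: hs.
by rewrite hl // scaleN1r addrC.
Qed.

Lemma DB p q : D p -> D q -> D (p - q). Proof. by move=> Dp Dq; case: (subB lin0 Dp Dq). Qed.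

Lemma B0B p q : D p -> D q -> B0 (p - q) = B0 p - B0 q.
Proof.
move=> Dp Dq; rewrite (subB lin0 Dp Dq).2.
rewrite hdom in Dp Dq; rewrite (subB lin0t Dp Dq).2.
by rewrite opprD !addrA; congr (_ + _); rewrite addrAC.
Qed.

Lemma Bbar v : exists z, forall p, D p -> ip (B0 p) v = ip p z.
Proof.
have hf : forall n : nat, exists p, D p /\ hn (v - p) < (n.+1%:R)^-1.
  by move=> n; apply: dense0; rewrite invr_gt0 ltr0Sn.
have [f hfP] := choice hf.
have [L hL] : exists L, forall e, 0 < e -> exists N, forall n, (N <= n)%N -> hn (B0 (f n) - L) < e.
  apply: (cauchy_from (K := c)); first exact: ltW.
  move=> m n; rewrite -B0B; try by case: (hfP m); try by case: (hfP n).
  apply: (le_trans (hc (DB (hfP m).1 (hfP n).1))).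
  apply: ler_wpM2l; first exact: ltW.
  have -> : f m - f n = (f m - v) + (v - f n) by rewrite addrA subrK.
  apply: (le_trans (hn_triangle _ _)); rewrite hnB.
  by apply: lerD; apply: ltW; [exact: (hfP m).2 | exact: (hfP n).2].
exists L => p Dp; apply/eqP; rewrite -subr_eq0; apply/eqP.
apply: (small_ip (a := B0 p) (b := p)) => e e0.
have [N1 hN1] := hL e e0.
have [N2 hN2] := archi_inv e0.
set n := maxn N1 N2.
exists (v - f n), (B0 (f n) - L); split.
- apply: (lt_trans (hfP n).2); apply: le_lt_trans hN2; apply: inv_le; exact: leq_maxr.
- by apply: hN1; exact: leq_maxl.
rewrite ipBr ipBr (B0sym Dp (hfP n).1).
by rewrite addrA subrK.
Qed.



Lemma addT (T : operator H) p q : linear_op T -> dom T p -> dom T q ->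
  dom T (p + q) /\ app T (p + q) = app T p + app T q.
Proof.
case=> [[_ hs] hl] dp dq; rewrite -[p]scale1r; split; first exact: hs.
by rewrite hl // !scale1r.
Qed.

Lemma domT1_Tt1 v : dom T1 v -> dom Tt1 v.
Proof.
move=> dv; have [z hz] := Bbar v.
suff : dom Tt1 v /\ app Tt1 v = z - app T1 v by case.
apply: (adj_intro hTt1 dense0) => u Du.
have Du' : dom Tt0 u by rewrite -hdom.
by rewrite ipBr -(hT1.2 v dv u Du') -hz // ipDl addrK.
Qed.

Lemma domTt1_T1 v : dom Tt1 v -> dom T1 v.
Proof.
move=> dv; have [z hz] := Bbar v.
suff : dom T1 v /\ app T1 v = z - app Tt1 v by case.
apply: (adj_intro hT1 denset) => u; rewrite -hdom => Du.
by rewrite ipBr -(hTt1.2 v dv u Du) -hz // ipDl addrAC subrr add0r.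
Qed.

Local Notation Y x := (app T1 x + app Tt1 x).

Lemma Y_ip x p : dom T1 x -> D p -> ip p (Y x) = ip (B0 p) x.
Proof.
move=> dx Dp; have Dp' : dom Tt0 p by rewrite -hdom.
rewrite ipDr -(hT1.2 x dx p Dp') -(hTt1.2 x (domT1_Tt1 dx) p Dp) ipDl.
by rewrite addrC.
Qed.

Lemma Y_bound x : dom T1 x -> hn (Y x) <= c * hn x.
Proof.
move=> dx; set y := Y x.
have key : hn y ^+ 2 <= c * hn y * hn x.
  apply: (eps_le (K := c * hn x + hn y)).
    by rewrite addr_ge0 ?mulr_ge0 ?hn_ge0 ?ltW.
  move=> e e0 e1; have [p [Dp hp]] := dense0 y e0.
  have r1 : rip y y = rip (y - p) y + rip p y by rewrite -ripDl subrK.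
  have r2 : rip p y = rip (B0 p) x by rewrite /rip Y_ip.
  have r3 := CS (B0 p) x.
  have r4 := hc Dp.
  have r5 := CS (y - p) y.
  have r6 : hn p <= hn y + e.
    have -> : p = y - (y - p) by rewrite opprB addrC subrK.
    apply: (le_trans (hn_triangle _ _)); rewrite hnN; apply: lerD => //; exact: ltW.
  have hB := hn_ge0 (B0 p); have hx := hn_ge0 x; have hy := hn_ge0 y.
  have hpp := hn_ge0 p; have hyp := hn_ge0 (y - p).
  have s1 : hn (B0 p) * hn x <= c * hn p * hn x by rewrite ler_wpM2r.
  have s2 : c * hn p * hn x <= c * (hn y + e) * hn x.
    by rewrite ler_wpM2r // ler_wpM2l // ltW.
  have s3 : hn (y - p) * hn y <= e * hn y by rewrite ler_wpM2r // ltW.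
  rewrite hn2 r1 r2.
  have -> : c * hn y * hn x + e * (c * hn x + hn y) = c * (hn y + e) * hn x + e * hn y by ring.
  lra.
have [y0|y0] := eqVneq (hn y) 0; first by rewrite y0; apply: mulr_ge0; [exact: ltW | exact: hn_ge0].
have yp : 0 < hn y by rewrite lt_def y0 hn_ge0.
by move: key; rewrite expr2 -mulrA [c * _]mulrC -mulrA ler_pM2l // mulrC.
Qed.

Lemma Re_rc (k : R) : Re (rc k) = k. Proof. by []. Qed.

Lemma Y_coer x : dom T1 x -> 2 * mu0 * hn x ^+ 2 <= rip (Y x) x.
Proof.
move=> dx; set y := Y x; rewrite ripC.
set X := hn x; set Yn := hn y.
have hx : 0 <= X := hn_ge0 x; have hy : 0 <= Yn := hn_ge0 y.
have Kge : 0 <= 2 * mu0 * (2 * X + 3) + c * (X + 1) + Yn.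
  have : 0 <= mu0 * X by rewrite mulr_ge0 // ltW.
  have : 0 <= c * X by rewrite mulr_ge0 // ltW.
  have m0 : 0 < mu0 := mu00.
  have t1 : 0 < 2 * mu0 by lra.
  have cc : 0 < c := c0.
  move=> h1 h2; nra.
apply: (eps_le Kge).
move=> e e0 e1; have [p [Dp hp]] := dense0 x e0.
set P := hn p; have hP : 0 <= P := hn_ge0 p.
have f1 : rip x y = rip (x - p) y + rip p y.
  by rewrite -ripDl (subrK p x).
have f2 : rip p y = rip (B0 p) p + rip (B0 p) (x - p).
  by rewrite /rip (Y_ip dx Dp) -ReD -ipDr subrKC.
have f3 : 2 * mu0 * P ^+ 2 <= rip (B0 p) p.
  by have := lec_Re (hmu Dp).
have f4 : - rip (B0 p) (x - p) <= c * P * e.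
  apply: (le_trans (CS' _ _)); apply: ler_pM; rewrite ?hn_ge0 ?hc ?ltW //.
have f5 : - rip (x - p) y <= e * Yn.
  apply: (le_trans (CS' _ _)); apply: ler_wpM2r => //; exact: ltW.
have f6 : X <= P + e.
  rewrite /X /P; have -> : x = (x - p) + p by rewrite subrK.
  apply: (le_trans (hn_triangle _ _)); rewrite addrC; apply: lerD => //; exact: ltW.
have f7 : P <= X + 1.
  rewrite /X /P; have -> : p = x - (x - p) by rewrite opprB addrC subrK.
  apply: (le_trans (hn_triangle _ _)); rewrite hnN; apply: lerD => //; apply: ltW; exact: lt_le_trans hp e1.
have g1 : X ^+ 2 <= P ^+ 2 + e * (2 * P + 1).
  have : X ^+ 2 <= (P + e) ^+ 2 by rewrite ler_pXn2r // ?nnegrE ?addr_ge0 // ltW.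
  rewrite sqrrD; nra.
have g2 : 2 * mu0 * X ^+ 2 <= 2 * mu0 * P ^+ 2 + e * (2 * mu0 * (2 * P + 1)).
  have : 2 * mu0 * X ^+ 2 <= 2 * mu0 * (P ^+ 2 + e * (2 * P + 1)).
    by apply: ler_wpM2l => //; rewrite mulr_ge0 // ltW.
  have -> : 2 * mu0 * (P ^+ 2 + e * (2 * P + 1)) = 2 * mu0 * P ^+ 2 + e * (2 * mu0 * (2 * P + 1)) by ring.
  by [].
have g3 : e * (2 * mu0 * (2 * P + 1)) <= e * (2 * mu0 * (2 * X + 3)).
  apply: ler_wpM2l; first exact: ltW.
  apply: ler_wpM2l; first by rewrite mulr_ge0 // ltW.
  lra.
have g4 : c * P * e <= e * (c * (X + 1)).
  rewrite [e * _]mulrC; apply: ler_wpM2r; first exact: ltW.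
  apply: ler_wpM2l => //; exact: ltW.
have -> : e * (2 * mu0 * (2 * X + 3) + c * (X + 1) + Yn) =
   e * (2 * mu0 * (2 * X + 3)) + e * (c * (X + 1)) + e * Yn by ring.
lra.
Qed.



Lemma ker_sub (T : operator H) a b : linear_op T -> kernel T a -> kernel T b -> kernel T (a - b).
Proof. move=> hl [da Ta] [db Tb]; have [h1 h2] := subB hl da db; by split; rewrite // h2 Ta Tb subrr. Qed.
Lemma ker_lin (T : operator H) (al : R[i]) a b : linear_op T -> kernel T a -> kernel T b -> kernel T (al *: a + b).
Proof. move=> [[_ hs] hl] [da Ta] [db Tb]; split; [exact: hs | by rewrite hl // Ta Tb scaler0 addr0]. Qed.
Lemma ker0 (T : operator H) : linear_op T -> kernel T 0.
Proof.
move=> hl; have [[d0 hs] _] := hl.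
have := subB hl d0 d0; rewrite subrr => -[_ h]; split => //.
by rewrite h subrr.
Qed.

Definition Mc := (c + 1) / (2 * mu0).
Definition Kc := 1 + (2 + c) * Mc.
Local Notation G x := (hn x + hn (app T1 x)).

Lemma Mc_ge0 : 0 <= Mc.
Proof. have := c0; have := mu00 => *; rewrite /Mc divr_ge0 //; lra. Qed.

Lemma div_est a g : 0 <= g -> 2 * mu0 * a <= (c + 1) * g -> a <= Mc * g.
Proof.
move=> g0 h; have m0 : 0 < 2 * mu0 by have := mu00; lra.
by rewrite /Mc mulrAC ler_pdivlMr // mulrC.
Qed.

Lemma est u v w : D u -> kernel T1 v -> kernel Tt1 w ->
  [/\ dom T1 (u + v + w), hn u <= Kc * G (u + v + w), hn v <= Kc * G (u + v + w),
      hn w <= Kc * G (u + v + w) & hn (app T0 u) <= Kc * G (u + v + w)].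
Proof.
move=> Du [dv1 T1v] [dw2 Tt1w].
have m0 := mu00; have cc := c0; have M0 := Mc_ge0.
have [du1 T1u] := T0_sub Du; have [du2 Tt1u] := Tt0_sub Du.
have Du' : dom Tt0 u by rewrite -hdom.
have dv2 := domT1_Tt1 dv1; have dw1 := domTt1_T1 dw2.
set x := u + v + w.
have [duv1 T1uv] := addT lin1 du1 dv1; have [dx1 T1x] := addT lin1 duv1 dw1.
have [duv2 Tt1uv] := addT lin1t du2 dv2; have [dx2 Tt1x] := addT lin1t duv2 dw2.
rewrite -/x in dx1 T1x dx2 Tt1x.
rewrite T1uv T1u T1v addr0 in T1x.
rewrite Tt1uv Tt1u Tt1w addr0 in Tt1x.
set g := G x.
have g0 : 0 <= g by rewrite addr_ge0 ?hn_ge0.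
have hx := hn_ge0 x; have hT := hn_ge0 (app T1 x).
have ew : 2 * mu0 * hn w <= hn (app T1 x).
  have hw := hn_ge0 w.
  have k1 : 2 * mu0 * hn w ^+ 2 <= rip (app T1 x) w.
    rewrite T1x ripDl /rip (hTt1.2 w dw2 u Du) Tt1w ip0r Re0 add0r -/(rip _ w).
    have := Y_coer dw1; by rewrite Tt1w addr0.
  have k2 := CS (app T1 x) w.
  have [w0|w0] := eqVneq (hn w) 0; first by rewrite w0 mulr0 hn_ge0.
  have wp : 0 < hn w by rewrite lt_def w0 hw.
  have : (2 * mu0 * hn w) * hn w <= hn (app T1 x) * hn w by rewrite -mulrA -expr2; lra.
  by rewrite ler_pM2r.
have ev : 2 * mu0 * hn v <= hn (app Tt1 x).
  have hv := hn_ge0 v.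
  have k1 : 2 * mu0 * hn v ^+ 2 <= rip (app Tt1 x) v.
    rewrite Tt1x ripDl /rip (hT1.2 v dv1 u Du') T1v ip0r Re0 add0r -/(rip _ v).
    have := Y_coer dv1; by rewrite T1v add0r.
  have k2 := CS (app Tt1 x) v.
  have [v0|v0] := eqVneq (hn v) 0; first by rewrite v0 mulr0 hn_ge0.
  have vp : 0 < hn v by rewrite lt_def v0 hv.
  have : (2 * mu0 * hn v) * hn v <= hn (app Tt1 x) * hn v by rewrite -mulrA -expr2; lra.
  by rewrite ler_pM2r.
have eTt : hn (app Tt1 x) <= c * hn x + hn (app T1 x).
  have -> : app Tt1 x = (app T1 x + app Tt1 x) - app T1 x by rewrite addrC addKr.
  apply: (le_trans (hn_triangle _ _)); rewrite hnN; apply: lerD => //; exact: Y_bound.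
have hw : hn w <= Mc * g.
  apply: div_est => //; have : hn (app T1 x) <= g by rewrite /g lerDr.
  have : g <= (c + 1) * g by rewrite mulrDl mul1r lerDr mulr_ge0 // ltW.
  lra.
have hv : hn v <= Mc * g.
  apply: div_est => //.
  have : c * hn x <= c * g by apply: ler_wpM2l; [exact: ltW | rewrite /g lerDl hn_ge0].
  have : hn (app T1 x) <= g by rewrite /g lerDr.
  rewrite mulrDl mul1r; lra.
have hu : hn u <= g + Mc * g + Mc * g.
  have -> : u = x - w - v by rewrite /x !addrK.
  apply: (le_trans (hn_triangle _ _)); rewrite hnN.
  apply: lerD; last exact: hv.
  apply: (le_trans (hn_triangle _ _)); rewrite hnN.
  apply: lerD; last exact: hw.
  by rewrite /g lerDl.
have hTu : hn (app T0 u) <= g + c * (Mc * g).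
  have -> : app T0 u = app T1 x - app T1 w by rewrite T1x addrK.
  apply: (le_trans (hn_triangle _ _)); rewrite hnN.
  apply: lerD; first by rewrite /g lerDr.
  have := Y_bound dw1; rewrite Tt1w addr0 => hb; apply: (le_trans hb).
  apply: ler_wpM2l => //; exact: ltW.
have Mg : 0 <= Mc * g by rewrite mulr_ge0.
have K1 : g + Mc * g + Mc * g <= Kc * g.
  rewrite /Kc mulrDl mul1r -mulrA mulrDl mulrDl; nra.
have K2 : Mc * g <= Kc * g.
  rewrite /Kc mulrDl mul1r -mulrA mulrDl mulrDl; nra.
have K3 : g + c * (Mc * g) <= Kc * g.
  rewrite /Kc mulrDl mul1r -mulrA mulrDl mulrDl; nra.
split => //; lra.
Qed.

Lemma gn_ge x : hn x <= graph_norm ip T1 x /\ hn (app T1 x) <= graph_norm ip T1 x.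
Proof.
rewrite /graph_norm; split.
  rewrite -[X in X <= _](ger0_norm (hn_ge0 x)) -sqrtr_sqr; apply: ler_wsqrtr.
  by rewrite lerDl sqr_ge0.
rewrite -[X in X <= _](ger0_norm (hn_ge0 (app T1 x))) -sqrtr_sqr; apply: ler_wsqrtr.
by rewrite lerDr sqr_ge0.
Qed.

Lemma Kc_ge0 : 0 <= Kc.
Proof. have := Mc_ge0; have := c0 => *; rewrite /Kc; apply: addr_ge0 => //; apply: mulr_ge0 => //; lra. Qed.

Lemma core x (u v w : nat -> H) :
  dom T1 x -> (forall n, D (u n)) -> (forall n, kernel T1 (v n)) -> (forall n, kernel Tt1 (w n)) ->
  (forall n, graph_norm ip T1 (x - (u n + v n + w n)) < (n.+1%:R)^-1) ->
  exists U V W, [/\ D U, kernel T1 V, kernel Tt1 W, x = U + V + W &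
    forall e, 0 < e -> exists N, forall n, (N <= n)%N -> hn (v n - V) < e /\ hn (w n - W) < e].
Proof.
move=> dx hu hv hw hg.
set s := fun n => u n + v n + w n.
have ds : forall n, dom T1 (s n).
  by move=> n; have [] := est (hu n) (hv n) (hw n).
have Gd : forall m n, G (s m - s n) <= 2 * ((m.+1%:R)^-1 + (n.+1%:R)^-1).
  move=> m n.
  have [g1 g2] := gn_ge (x - s m); have [g3 g4] := gn_ge (x - s n).
  have hm : graph_norm ip T1 (x - s m) < (m.+1%:R)^-1 := hg m.
  have hn' : graph_norm ip T1 (x - s n) < (n.+1%:R)^-1 := hg n.
  have e1 : s m - s n = (x - s n) - (x - s m) by rewrite opprB [RHS]addrC subch.
  have e2 : app T1 (s m - s n) = app T1 (x - s n) - app T1 (x - s m).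
    rewrite (subB lin1 (ds m) (ds n)).2 (subB lin1 dx (ds n)).2 (subB lin1 dx (ds m)).2.
    by rewrite opprB [RHS]addrC subch.
  have t1 : hn (s m - s n) <= hn (x - s n) + hn (x - s m).
    by rewrite e1; apply: (le_trans (hn_triangle _ _)); rewrite hnN.
  have t2 : hn (app T1 (s m - s n)) <= hn (app T1 (x - s n)) + hn (app T1 (x - s m)).
    by rewrite e2; apply: (le_trans (hn_triangle _ _)); rewrite hnN.
  move: hm hn'; set a := (m.+1%:R)^-1; set b := (n.+1%:R)^-1 => hm hn'. lra.
have Kc0 := Kc_ge0.
have hK : 0 <= Kc * 2 by rewrite mulr_ge0.
have comp : forall m n, [/\ hn (u m - u n) <= Kc * 2 * ((m.+1%:R)^-1 + (n.+1%:R)^-1),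
     hn (v m - v n) <= Kc * 2 * ((m.+1%:R)^-1 + (n.+1%:R)^-1),
     hn (w m - w n) <= Kc * 2 * ((m.+1%:R)^-1 + (n.+1%:R)^-1) &
     hn (app T0 (u m) - app T0 (u n)) <= Kc * 2 * ((m.+1%:R)^-1 + (n.+1%:R)^-1)].
  move=> m n.
  have := est (DB (hu m) (hu n)) (ker_sub lin1 (hv m) (hv n)) (ker_sub lin1t (hw m) (hw n)).
  rewrite -sub3 -/(s m) -/(s n) -(subB lin0 (hu m) (hu n)).2.
  have := Gd m n; set q := G _ => hq.
  have hq' : Kc * q <= Kc * 2 * ((m.+1%:R)^-1 + (n.+1%:R)^-1) by rewrite -mulrA ler_wpM2l.
  by case=> _ a1 a2 a3 a4; split; apply: le_trans hq'.
have [U hU] : exists L, forall e, 0 < e -> exists N, forall n, (N <= n)%N -> hn (u n - L) < e.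
  by apply: (cauchy_from hK) => m n; case: (comp m n).
have [V hV] : exists L, forall e, 0 < e -> exists N, forall n, (N <= n)%N -> hn (v n - L) < e.
  by apply: (cauchy_from hK) => m n; case: (comp m n).
have [W hW] : exists L, forall e, 0 < e -> exists N, forall n, (N <= n)%N -> hn (w n - L) < e.
  by apply: (cauchy_from hK) => m n; case: (comp m n).
have [Z hZ] : exists L, forall e, 0 < e -> exists N, forall n, (N <= n)%N -> hn (app T0 (u n) - L) < e.
  by apply: (cauchy_from hK) => m n; case: (comp m n).
have kV : kernel T1 V.
  apply: (adj_ker_closed hT1 denset) => e e0.
  have [N hN] := hV e e0; exists (v N); split; [exact: hv | exact: hN].
have kW : kernel Tt1 W.
  apply: (adj_ker_closed hTt1 dense0) => e e0.
  have [N hN] := hW e e0; exists (w N); split; [exact: hw | exact: hN].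
have [DU _] : D U /\ app T0 U = Z.
  apply: cl0 => e e0.
  have [N1 hN1] := hU e e0; have [N2 hN2] := hZ e e0.
  exists (u (maxn N1 N2)); split; first exact: hu.
  split; [apply: hN1; exact: leq_maxl | apply: hN2; exact: leq_maxr].
exists U, V, W; split => //; last first.
  move=> e e0; have [N1 hN1] := hV e e0; have [N2 hN2] := hW e e0.
  exists (maxn N1 N2) => n hn'; split.
    by apply: hN1; apply: leq_trans hn'; exact: leq_maxl.
  by apply: hN2; apply: leq_trans hn'; exact: leq_maxr.
apply/eqP; rewrite -subr_eq0; apply/eqP.
apply: (hn_small0 (K := 4)); first by [].
move=> e e0 _.
have [N1 hN1] := hU e e0; have [N2 hN2] := hV e e0; have [N3 hN3] := hW e e0.
have [N4 hN4] := archi_inv e0.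
set n := maxn (maxn N1 N2) (maxn N3 N4).
have l1 : (N1 <= n)%N by rewrite /n !leq_max leqnn.
have l2 : (N2 <= n)%N by rewrite /n !leq_max leqnn orbT.
have l3 : (N3 <= n)%N by rewrite /n !leq_max leqnn !orbT.
have l4 : (N4 <= n)%N by rewrite /n !leq_max leqnn !orbT.
have -> : x - (U + V + W) = (x - s n) + ((u n - U) + (v n - V) + (w n - W)).
  by rewrite -sub3 subch.
have a1 : hn (x - s n) < e.
  apply: (le_lt_trans (gn_ge _).1); apply: (lt_trans (hg n)).
  apply: le_lt_trans hN4; exact: inv_le.
have a2 := hN1 n l1; have a3 := hN2 n l2; have a4 := hN3 n l3.
apply: (le_trans (hn_triangle _ _)).
have := hn_triangle (u n - U + (v n - V)) (w n - W).
have := hn_triangle (u n - U) (v n - V).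
lra.
Qed.

Lemma G0 : G 0 = 0.
Proof. by have [_ ->] := ker0 lin1; rewrite hn0 addr0. Qed.

Lemma hn_le0 z : hn z <= 0 -> z = 0.
Proof. by move=> h; apply: hn_eq0; apply/eqP; rewrite eq_le h hn_ge0. Qed.

Lemma dir3 : direct3 (dom T0) (kernel T1) (kernel Tt1).
Proof.
move=> a b d Da kb kd e0; have [_ h1 h2 h3 _] := est Da kb kd.
rewrite e0 G0 mulr0 in h1 h2 h3.
by split; apply: hn_le0.
Qed.

Lemma lim0 (W : H) (f : nat -> H) P :
  (forall e, 0 < e -> exists N, forall n, (N <= n)%N -> P n e /\ hn (f n - W) < e) ->
  (forall n, f n = 0) -> W = 0.
Proof.
move=> h f0; apply: (hn_small0 (K := 1)); first exact: ler01.
move=> e e0 _; have [N hN] := h e e0; have [_ hW] := hN N (leqnn N).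
by rewrite f0 sub0r hnN in hW; rewrite mulr1; exact: ltW.
Qed.

Lemma main_ops :
  [/\ direct3 (dom T0) (kernel T1) (kernel Tt1),
      is_subspace (sum3 (dom T0) (kernel T1) (kernel Tt1)),
      closed_in_graph ip T1 (sum3 (dom T0) (kernel T1) (kernel Tt1)),
      direct2 (dom T0) (kernel T1) /\ closed_in_graph ip T1 (sum2 (dom T0) (kernel T1)) &
      direct2 (dom T0) (kernel Tt1) /\ closed_in_graph ip T1 (sum2 (dom T0) (kernel Tt1))].
Proof.
have [[D0 DL] _] := lin0.
have k10 := ker0 lin1; have kt0 := ker0 lin1t.
have inv0 : forall n : nat, 0 < (n.+1%:R : R)^-1 by move=> n; rewrite invr_gt0 ltr0Sn.
split.
- exact: dir3.
- split; first by exists 0, 0, 0; split => //; rewrite !addr0.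
  move=> al _ _ [a1 [b1 [d1 [h1 h2 h3 ->]]]] [a2 [b2 [d2 [h1' h2' h3' ->]]]].
  exists (al *: a1 + a2), (al *: b1 + b2), (al *: d1 + d2); split.
  + exact: DL.
  + exact: ker_lin lin1 h2 h2'.
  + exact: ker_lin lin1t h3 h3'.
  + by rewrite !scalerDr add3.
- split; first by move=> x [a [b [d [Da kb kd ->]]]]; have [] := est Da kb kd.
  move=> x dx hx.
  have hf : forall n : nat, exists t : H * H * H, [/\ D t.1.1, kernel T1 t.1.2, kernel Tt1 t.2 &
      graph_norm ip T1 (x - (t.1.1 + t.1.2 + t.2)) < (n.+1%:R)^-1].
    move=> n; have [s [[a [b [d [Da kb kd ->]]]] hs]] := hx _ (inv0 n).
    by exists (a, b, d).
  have [f hfP] := choice hf.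
  have [U [V [W [DU kV kW -> _]]]] := core (u := fun n => (f n).1.1) (v := fun n => (f n).1.2)
     (w := fun n => (f n).2) dx (fun n => let: And4 a _ _ _ := hfP n in a)
     (fun n => let: And4 _ a _ _ := hfP n in a) (fun n => let: And4 _ _ a _ := hfP n in a)
     (fun n => let: And4 _ _ _ a := hfP n in a).
  by exists U, V, W.
- split.
    move=> a b Da kb e0; have e0' : a + b + 0 = 0 by rewrite addr0.
    by have [] := dir3 Da kb kt0 e0'.
  split; first by move=> x [a Da [b kb <-]]; have [] := est Da kb kt0; rewrite addr0.
  move=> x dx hx.
  have hf : forall n : nat, exists t : H * H, [/\ D t.1, kernel T1 t.2 &
      graph_norm ip T1 (x - (t.1 + t.2 + 0)) < (n.+1%:R)^-1].
    move=> n; have [s [[a Da [b kb <-]] hs]] := hx _ (inv0 n).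
    by exists (a, b); rewrite addr0.
  have [f hfP] := choice hf.
  have [U [V [W [DU kV kW -> hlim]]]] := core (u := fun n => (f n).1) (v := fun n => (f n).2)
     (w := fun n => 0) dx (fun n => let: And3 a _ _ := hfP n in a)
     (fun n => let: And3 _ a _ := hfP n in a) (fun=> kt0)
     (fun n => let: And3 _ _ a := hfP n in a).
  have W0 : W = 0.
    apply: (lim0 (f := fun n => 0) (P := fun n e => hn ((f n).2 - V) < e)) => //.
  by exists U => //; exists V => //; rewrite W0 addr0.
- split.
    move=> a d Da kd e0; have e0' : a + 0 + d = 0 by rewrite addr0.
    by have [] := dir3 Da k10 kd e0'.
  split; first by move=> x [a Da [d kd <-]]; have [] := est Da k10 kd; rewrite addr0.
  move=> x dx hx.
  have hf : forall n : nat, exists t : H * H, [/\ D t.1, kernel Tt1 t.2 &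
      graph_norm ip T1 (x - (t.1 + 0 + t.2)) < (n.+1%:R)^-1].
    move=> n; have [s [[a Da [d kd <-]] hs]] := hx _ (inv0 n).
    by exists (a, d); rewrite addr0.
  have [f hfP] := choice hf.
  have [U [V [W [DU kV kW -> hlim]]]] := core (u := fun n => (f n).1) (v := fun n => 0)
     (w := fun n => (f n).2) dx (fun n => let: And3 a _ _ := hfP n in a)
     (fun=> k10) (fun n => let: And3 _ a _ := hfP n in a)
     (fun n => let: And3 _ _ a := hfP n in a).
  have V0 : V = 0.
    apply: (lim0 (f := fun n => 0) (P := fun n e => hn ((f n).2 - W) < e)); last by [].
    move=> e e0; have [N hN] := hlim e e0; exists N => n hn'; have [a b] := hN n hn'; by split.
  by exists U => //; exists W => //; rewrite V0 addr0.
Qed.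
End Ops.
End Base.

Unset Implicit Arguments.
Set Strict Implicit.
Theorem lemma3p5 (R : realType) (H : lmodType R[i]) (ip : H -> H -> R[i])
  (hH : is_hilbert ip) (T0 Tt0 T1 Tt1 : operator H)
  (hpair : joint_closed_friedrichs ip T0 Tt0)
  (hT1 : is_adjoint ip Tt0 T1) (hTt1 : is_adjoint ip T0 Tt1) :
  [/\ direct3 (dom T0) (kernel T1) (kernel Tt1),
      is_subspace (sum3 (dom T0) (kernel T1) (kernel Tt1)),
      closed_in_graph ip T1 (sum3 (dom T0) (kernel T1) (kernel Tt1)),
      direct2 (dom T0) (kernel T1) /\ closed_in_graph ip T1 (sum2 (dom T0) (kernel T1)) &
      direct2 (dom T0) (kernel Tt1) /\ closed_in_graph ip T1 (sum2 (dom T0) (kernel Tt1))].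
Proof.
case: hpair => -[[[lin0 dense0] [lin0t _]] hdom hsym [c [c0 hc]] [mu0 [mu00 hmu]]] [cl0 _].
exact: (main_ops hH hdom lin0 lin0t dense0 hsym c0 mu00 hc hmu cl0 hT1 hTt1).
Qed.
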